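(* Let $s,q\in\mathbb N$, $c\in\mathbb R^s$, $C:=\mathrm{diag}(c_1,\dots,c_s)$, and let $K_n\in\mathbb R^{s\times s}$ satisfy $$(c^{l-1})^{\mathsf T}K_n=\mathbb 1^{\mathsf T}K_nC^{l-1},\qquad l=1,\dots,q.$$ Then for every $k\in\mathbb N$ the matrices $V_q^{\mathsf T}K_nV_k$ and $\mathcal L_{q,k}(V_q^{\mathsf T}K_nV_k)$ have Hankel form.
   Context: $\mathbb 1\in\mathbb R^s$ is the all-ones vector; powers of vectors are componentwise. $V_k:=(\mathbb 1,c,\dots,c^{k-1})\in\mathbb R^{s\times k}$, $\tilde E_k:=(i\,\delta_{i+1,j})_{i,j=1}^k$, and $\mathcal L_{q,k}(X):=\tilde E_q^{\mathsf T}X+X\tilde E_k$ for $X\in\mathbb R^{q\times k}$. A matrix $X=(x_{ij})$ has Hankel form if $x_{ij}$ depends only on $i+j$. *)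

(* Defs.v *)
From mathcomp Require Import all_boot all_order all_algebra.
Set Implicit Arguments. Unset Strict Implicit. Unset Printing Implicit Defensive.
Import Order.TTheory GRing.Theory Num.Theory.
Local Open Scope ring_scope.

Definition vpow (R : pzRingType) (s : nat) (c : 'cV[R]_s) (l : nat) : 'cV[R]_s :=
  \col_i (c i 0 ^+ l).

Definition Vmx (R : pzRingType) (s : nat) (c : 'cV[R]_s) (k : nat) : 'M[R]_(s, k) :=
  \matrix_(i < s, j < k) (c i 0 ^+ j).

(* tilde E_k = (i delta_{i+1,j})_{i,j=1..k}; 0-indexed: entry (i,j) = i+1 if j = i+1. *)
Definition Etil (R : pzRingType) (k : nat) : 'M[R]_k :=
  \matrix_(i < k, j < k) (if (j == i.+1 :> nat) then (i.+1)%:R else 0).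

Definition Lop (R : pzRingType) (q k : nat) (X : 'M[R]_(q, k)) : 'M[R]_(q, k) :=
  (Etil R q)^T *m X + X *m Etil R k.

Definition hankel (R : pzRingType) (m n : nat) (X : 'M[R]_(m, n)) : Prop :=
  forall (i i' : 'I_m) (j j' : 'I_n), (i + j)%N = (i' + j')%N -> X i j = X i' j'.

(* Main.v *)
Require Import Defs.
From mathcomp Require Import all_boot all_order all_algebra.
Import Order.TTheory GRing.Theory Num.Theory.
Local Open Scope ring_scope.

Lemma diag_pow_entry (R : realFieldType) (s : nat) (c : 'cV[R]_s) (M : 'M[R]_(1, s)) n b :
  (M *m (diag_mx c^T) ^+ n) 0 b = M 0 b * c b 0 ^+ n.
Proof.
elim: n M => [|n IH] M; first by rewrite expr0 mulmx1 expr0 mulr1.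
rewrite exprSr -mulmxE mulmxA mul_mx_diag mxE IH mxE exprSr mulrA.
by [].
Qed.

Theorem lemma4p4 (R : realFieldType) (s q : nat) (c : 'cV[R]_s) (K : 'M[R]_s) :
  (forall l : nat, (1 <= l <= q)%N ->
     (vpow c l.-1)^T *m K = (const_mx 1 : 'cV[R]_s)^T *m K *m (diag_mx c^T) ^+ l.-1) ->
  forall k : nat,
    hankel ((Vmx c q)^T *m K *m Vmx c k) /\
    hankel (Lop ((Vmx c q)^T *m K *m Vmx c k)).
Proof.
move=> H k.
set h := fun n : nat => \sum_b ((const_mx 1 : 'cV[R]_s)^T *m K) 0 b * c b 0 ^+ n.
have HX : forall (i : 'I_q) (j : 'I_k),
    ((Vmx c q)^T *m K *m Vmx c k) i j = h (i + j)%N.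
  move=> i j; rewrite /h mxE; apply: eq_bigr => b _.
  have Hi : (1 <= i.+1 <= q)%N by rewrite /= ltn_ord.
  have := congr1 (fun M : 'M[R]_(1,s) => M 0 b) (H _ Hi) => /=.
  rewrite diag_pow_entry /= => E.
  rewrite exprD mulrA -E [in RHS]mxE [X in _ * X = _]mxE; congr (_ * _).
  rewrite !mxE; apply: eq_bigr => a _.
  by rewrite !mxE.
split.
  by move=> i i' j j' E; rewrite !HX E.
have HL : forall (X : 'M[R]_(q, k)), (forall (i : 'I_q) (j : 'I_k), X i j = h (i + j)%N) ->
  forall (i : 'I_q) (j : 'I_k),
    Lop X i j = (i + j)%:R * h (i + j).-1.
  move=> X HX0 i j; rewrite /Lop !mxE natrD mulrDl; congr (_ + _).
    case: i => [[|i'] Hi] /=.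
      rewrite mul0r; apply: big1 => m _; rewrite !mxE /=.
      by rewrite mul0r.
    rewrite (bigD1 (Ordinal (ltnW Hi))) //= big1 ?addr0.
      by rewrite !mxE /= eqxx HX0.
    move=> m Hm; rewrite !mxE /=.
    case: eqP => [[E]|]; last by rewrite mul0r.
    by exfalso; move/eqP: Hm; apply; apply: val_inj; rewrite /= E.
  case: j => [[|j'] Hj] /=.
    rewrite mul0r; apply: big1 => m _; rewrite !mxE /=.
    by rewrite mulr0.
  rewrite (bigD1 (Ordinal (ltnW Hj))) //= big1 ?addr0.
    by rewrite !mxE /= eqxx HX0 addnS mulrC.
  move=> m Hm; rewrite !mxE /=.
  case: eqP => [[E]|]; last by rewrite mulr0.
  by exfalso; move/eqP: Hm; apply; apply: val_inj; rewrite /= E.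
by move=> i i' j j' E; rewrite !(HL _ HX) E.
Qed.
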